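(* Let $R$ be a commutative ring and $f\in R$. If $Rf^n$ is a projective $R$-module for some $n\geq 1$, then for every $k\geq n$ the $R$-module $Rf^k$ is canonically isomorphic to $Rf^n$ (equivalently, $\operatorname{Ann}(f^k)=\operatorname{Ann}(f^n)$ for all $k\geq n$). *)

(* Defs.v *)
From HB Require Import structures.
From mathcomp Require Import all_boot all_order all_algebra.
Set Implicit Arguments. Unset Strict Implicit. Unset Printing Implicit Defensive.
Import GRing.Theory.
Local Open Scope ring_scope.

Definition principal_ideal (R : comPzRingType) (a : R) : R -> Prop :=
  fun x => exists r : R, x = r * a.

(* An R-linear map from a submodule S of R (given by a predicate on R) to an
   R-module N is represented by a function h : R -> N that is R-linear on S;
   its values outside S are irrelevant. *)
Definition linear_on (R : comPzRingType) (S : R -> Prop) (N : lmodType R)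
  (h : R -> N) : Prop :=
  forall (c : R) (x y : R), S x -> S y -> h (c * x + y) = c *: h x + h y.

Definition projective_submodule (R : comPzRingType) (S : R -> Prop) : Prop :=
  forall (M N : lmodType R) (g : {linear M -> N}),
    (forall y : N, exists x : M, g x = y) ->
    forall h : R -> N, linear_on S h ->
    exists l : R -> M, linear_on S l /\ (forall x, S x -> g (l x) = h x).

(* Main.v *)
Require Import Defs.
From HB Require Import structures.
From mathcomp Require Import all_boot all_order all_algebra.
From mathcomp Require Import boolp.
Import GRing.Theory.
Local Open Scope ring_scope.

Record cyc (R : comPzRingType) (a : R) := Cyc { cval : R; cP : principal_ideal a cval }.
Arguments cyc {R}.
Arguments Cyc {R a}.
Arguments cval {R a}.
Arguments cP {R a}.

HB.instance Definition _ (R : comPzRingType) (a : R) := gen_eqMixin (cyc a).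
HB.instance Definition _ (R : comPzRingType) (a : R) := gen_choiceMixin (cyc a).

Section C.
Context (R : comPzRingType) (a : R).

Lemma cyc_inj (u v : cyc a) : cval u = cval v -> u = v.
Proof.
case: u => x px; case: v => y py /= e; subst y.
by rewrite (Prop_irrelevance px py).
Qed.

Lemma p0 : principal_ideal a 0. Proof. by exists 0; rewrite mul0r. Qed.
Lemma pD x y : principal_ideal a x -> principal_ideal a y -> principal_ideal a (x + y).
Proof. by move=> [r ->] [s ->]; exists (r + s); rewrite mulrDl. Qed.
Lemma pN x : principal_ideal a x -> principal_ideal a (- x).
Proof. by move=> [r ->]; exists (- r); rewrite mulNr. Qed.
Lemma pZ c x : principal_ideal a x -> principal_ideal a (c * x).
Proof. by move=> [r ->]; exists (c * r); rewrite mulrA. Qed.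

Definition czero : cyc a := Cyc 0 p0.
Definition cadd (u v : cyc a) : cyc a := Cyc (cval u + cval v) (pD _ _ (cP u) (cP v)).
Definition copp (u : cyc a) : cyc a := Cyc (- cval u) (pN _ (cP u)).
Definition cscale (c : R) (u : cyc a) : cyc a := Cyc (c * cval u) (pZ c _ (cP u)).

Lemma caddA : associative cadd. Proof. by move=> *; apply: cyc_inj; rewrite /= addrA. Qed.
Lemma caddC : commutative cadd. Proof. by move=> *; apply: cyc_inj; rewrite /= addrC. Qed.
Lemma cadd0 : left_id czero cadd. Proof. by move=> *; apply: cyc_inj; rewrite /= add0r. Qed.
Lemma caddN : left_inverse czero copp cadd. Proof. by move=> *; apply: cyc_inj; rewrite /= addNr. Qed.
End C.
Arguments cscale {R a}.
Arguments pD {R a x y}.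
Arguments pZ {R a}.
Arguments p0 {R a}.

HB.instance Definition _ (R : comPzRingType) (a : R) :=
  GRing.isZmodule.Build (cyc a) (@caddA R a) (@caddC R a) (@cadd0 R a) (@caddN R a).

Section C2.
Context (R : comPzRingType) (a : R).
Lemma cscA c d (v : cyc a) : cscale c (cscale d v) = cscale (c * d) v.
Proof. by apply: cyc_inj; rewrite /= mulrA. Qed.
Lemma csc1 : left_id 1 (@cscale R a).
Proof. by move=> v; apply: cyc_inj; rewrite /= mul1r. Qed.
Lemma cscDr : right_distributive (@cscale R a) +%R.
Proof. by move=> c u v; apply: cyc_inj; rewrite /= mulrDr. Qed.
Lemma cscDl (v : cyc a) : {morph (@cscale R a)^~ v: c d / c + d}.
Proof. by move=> c d; apply: cyc_inj; rewrite /= mulrDl. Qed.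
End C2.

HB.instance Definition _ (R : comPzRingType) (a : R) :=
  GRing.Zmodule_isLmodule.Build R (cyc a) (@cscA R a) (@csc1 R a) (@cscDr R a) (@cscDl R a).

Definition gmap (R : comPzRingType) (a : R) (r : R^o) : cyc a :=
  @Cyc R a (r * a) (ex_intro (fun s : R => r * a = s * a) r erefl).

Lemma gmap_lin (R : comPzRingType) (a : R) : linear (@gmap R a).
Proof. by move=> c u v; apply: cyc_inj; rewrite /= mulrDl mulrA. Qed.

HB.instance Definition _ (R : comPzRingType) (a : R) :=
  GRing.isLinear.Build R R^o (cyc a) *:%R (@gmap R a) (@gmap_lin R a).

Definition hmap (R : comPzRingType) (a : R) (x : R) : cyc a :=
  match pselect (principal_ideal a x) with
  | left p => Cyc x p
  | right _ => 0
  end.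

Arguments hmap {R}.
Arguments gmap {R}.
Lemma hval (R : comPzRingType) (a : R) x : principal_ideal a x -> cval (hmap a x) = x.
Proof. by rewrite /hmap; case: pselect. Qed.

Lemma split_lemma (R : comPzRingType) (a : R) :
  projective_submodule (principal_ideal a) ->
  exists u : R, u * a = a /\ forall y, y * a = 0 -> y * u = 0.
Proof.
move=> P.
have surj : forall y : cyc a, exists x : R^o, gmap a x = y.
  by case=> y [r e]; exists r; apply: cyc_inj; rewrite /= e.
have hl : linear_on (principal_ideal a) (@hmap R a).
  move=> c x y Px Py; apply: cyc_inj.
  rewrite hval; last by apply: pD => //; apply: pZ.
  by rewrite /= !hval.
have [l [ll gl]] := P _ _ (gmap a) surj _ hl.
have l0 : l 0 = 0.
  have := ll 1 0 0 p0 p0; rewrite mul1r addr0 scale1r => e.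
  by have := congr1 (fun z => z - l 0) e; rewrite /= addrK subrr.
have Pa : principal_ideal a a by exists 1; rewrite mul1r.
exists (l a); split.
  by have := congr1 cval (gl a Pa); rewrite hval.
move=> y ya.
have := ll y a 0 Pa p0; rewrite addr0 ya l0 => e.
by move: e; rewrite addr0 => ->.
Qed.

Theorem proposition2p8 (R : comPzRingType) (f : R) (n : nat) :
  (1 <= n)%N ->
  projective_submodule (principal_ideal (f ^+ n)) ->
  forall k : nat, (n <= k)%N ->
    (* the canonical map R f^n -> R f^k, x |-> f^(k-n) x, is an isomorphism *)
    ((forall x y : R, principal_ideal (f ^+ n) x -> principal_ideal (f ^+ n) y ->
        f ^+ (k - n) * x = f ^+ (k - n) * y -> x = y) /\
     (forall z : R, principal_ideal (f ^+ k) z ->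
        exists2 x : R, principal_ideal (f ^+ n) x & f ^+ (k - n) * x = z))
    /\
    (* equivalently, Ann(f^k) = Ann(f^n) *)
    (forall x : R, x * f ^+ k = 0 <-> x * f ^+ n = 0).
Proof.
move=> n1 P k nk.
have [u [ua uann]] := @split_lemma R _ P.
have step : forall d x, x * f ^+ (n + d).+1 = 0 -> x * f ^+ (n + d) = 0.
  move=> d x h.
  have e1 : x * f ^+ (d.+1) * f ^+ n = 0.
    by rewrite -mulrA -exprD addSn addnC.
  have e2 := uann _ e1.
  have -> : x * f ^+ (n + d) = x * f ^+ (n + d) * u + x * f ^+ (n + d) * (1 - u).
    by rewrite -mulrDr addrC subrK mulr1.
  have -> : x * f ^+ (n + d) * (1 - u) = 0.
    by rewrite addnC exprD -!mulrA mulrBr mulr1 [f ^+ n * u]mulrC ua subrr !mulr0.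
  rewrite addr0.
  have -> : (n + d = d.+1 + n.-1)%N by rewrite addSn -addnS prednK // addnC.
  by rewrite exprD mulrA [_ * f ^+ n.-1]mulrC -mulrA e2 mulr0.
have ann : forall x, x * f ^+ k = 0 <-> x * f ^+ n = 0.
  move=> x; rewrite -(subnKC nk); split.
    elim: (k - n)%N => [|d IH]; first by rewrite addn0.
    by move=> h; apply: IH; apply: step; rewrite -addnS.
  by move=> h; rewrite exprD mulrA h mul0r.
split; last exact: ann.
split.
  move=> x y [r ->] [s ->] e.
  apply/eqP; rewrite -subr_eq0 -mulrBl; apply/eqP; apply/ann.
  by rewrite mulrBl -(subnKC nk) addnC exprD !mulrA -![_ * f ^+ (k - n)]mulrC -!mulrA e subrr.
move=> z [r ->]; exists (r * f ^+ n); first by exists r.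
by rewrite mulrCA -exprD subnK.
Qed.
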